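(* Let $a<b$, let $F:(a,b)\to\mathcal{K}(\mathbb{R}^n)$ be metrically differentiable at $x_0\in(a,b)$. Then, as $x\to x_0$ with $x\in(a,b)$: (i) $\mathrm{haus}\big(L^MF|_{y_0}(x),\ \{y_0\}+(x-x_0)[x_0,x]^MF|_{y_0}\big)=o(|x-x_0|)$ uniformly in $y_0\in F(x_0)$, i.e. $\sup_{y_0\in F(x_0)}\mathrm{haus}\big(L^MF|_{y_0}(x),\{y_0\}+(x-x_0)[x_0,x]^MF|_{y_0}\big)/|x-x_0|\to0$; (ii) $\mathrm{haus}(F(x),L^MF(x))=o(|x-x_0|)$.
   Context: $\mathcal{K}(\mathbb{R}^n)$ is the set of nonempty compact subsets of $\mathbb{R}^n$, $|\cdot|$ the Euclidean norm, $\mathrm{dist}(x,A)=\min_{a\in A}|x-a|$, $\mathrm{haus}$ the Hausdorff distance. For $c\in\mathbb{R}^n$, $\lambda\in\mathbb{R}$ and a set $A$: $\{c\}+\lambda A=\{c+\lambda a: a\in A\}$. For $a\in\mathbb{R}^n$, $B\in\mathcal{K}(\mathbb{R}^n)$, $\Pi_B(a)=\{b\in B:|a-b|=\mathrm{dist}(a,B)\}$; for $A,B\in\mathcal{K}(\mathbb{R}^n)$, $\Pi(A,B)=\{(a,b)\in A\times B: a\in\Pi_A(b)\text{ or }b\in\Pi_B(a)\}$ (metric pairs). For $x\ne x_0$ and $y_0\in F(x_0)$: $[x_0,x]^MF|_{y_0}=\{\frac{y-y_0}{x-x_0}:(y_0,y)\in\Pi(F(x_0),F(x))\}$. $F$ is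 metrically differentiable from the right at $x_0$ if for every $y\in F(x_0)$ there is a nonempty set $D^M_+F(x_0)|_y$ such that $\sup_{y\in F(x_0)}\mathrm{haus}(D^M_+F(x_0)|_y,[x_0,x]^MF|_y)\to0$ as $x\to x_0^+$; from the left analogously with $D^M_-F(x_0)|_y$ and $x\to x_0^-$; metrically differentiable at $x_0$ means both. The local metric linear approximant anchored at $y_0\in F(x_0)$ is $L^MF|_{y_0}(x)=\{y_0\}+(x-x_0)D^M_+F(x_0)|_{y_0}$ for $x\ge x_0$ and $L^MF|_{y_0}(x)=\{y_0\}+(x-x_0)D^M_-F(x_0)|_{y_0}$ for $x<x_0$; the local metric linear approximant is $L^MF(x)=\bigcup_{y\in F(x_0)}L^MF|_y(x)$. *)

(* Defs.v *)
(* R^n is modelled as row vectors 'rV[R]_n with the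
   Euclidean norm defined explicitly (the library norm on matrices is the max norm). *)
From HB Require Import structures.
From mathcomp Require Import all_boot all_order all_algebra.
From mathcomp Require Import all_classical all_reals all_analysis.
Set Implicit Arguments. Unset Strict Implicit. Unset Printing Implicit Defensive.
Import Order.TTheory GRing.Theory Num.Theory.
Import numFieldNormedType.Exports numFieldTopology.Exports.
Local Open Scope classical_set_scope.
Local Open Scope ring_scope.

Section Defs.
Context {R : realType} {n : nat}.
Notation V := 'rV[R]_n.

Definition enorm (v : V) : R := Num.sqrt (\sum_(i < n) (v ord0 i) ^+ 2).

Definition edist (x : V) (A : set V) : \bar R :=
  ereal_inf [set (enorm (x - a))%:E | a in A].

Definition haus (A B : set V) : \bar R :=
  maxe (ereal_sup [set edist a B | a in A]) (ereal_sup [set edist b A | b in B]).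

Definition proj (B : set V) (a : V) : set V :=
  [set b | B b /\ (enorm (a - b))%:E = edist a B].

Definition mpairs (A B : set V) : set (V * V) :=
  [set p | A p.1 /\ B p.2 /\ (proj A p.2 p.1 \/ proj B p.1 p.2)].

Definition trans_scale (c : V) (l : R) (A : set V) : set V :=
  [set c + l *: a | a in A].

Definition mquot (F : R -> set V) (x0 x : R) (y0 : V) : set V :=
  [set (x - x0)^-1 *: (y - y0) | y in [set y | mpairs (F x0) (F x) (y0, y)]].

Definition mdiff_right (F : R -> set V) (x0 : R) (D : V -> set V) : Prop :=
  (forall y, F x0 y -> D y !=set0) /\
  forall eps : R, 0 < eps -> exists2 delta : R, 0 < delta &
    forall x, x0 < x < x0 + delta ->
      (ereal_sup [set haus (D y) (mquot F x0 x y) | y in F x0] <= eps%:E)%E.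

Definition mdiff_left (F : R -> set V) (x0 : R) (D : V -> set V) : Prop :=
  (forall y, F x0 y -> D y !=set0) /\
  forall eps : R, 0 < eps -> exists2 delta : R, 0 < delta &
    forall x, x0 - delta < x < x0 ->
      (ereal_sup [set haus (D y) (mquot F x0 x y) | y in F x0] <= eps%:E)%E.

Definition LMa (x0 : R) (Dp Dm : V -> set V) (y0 : V) (x : R) : set V :=
  if x0 <= x then trans_scale y0 (x - x0) (Dp y0)
  else trans_scale y0 (x - x0) (Dm y0).

Definition LM (F : R -> set V) (x0 : R) (Dp Dm : V -> set V) (x : R) : set V :=
  \bigcup_(y in F x0) LMa x0 Dp Dm y x.

End Defs.

(* Main.v *)
Require Import Defs.
From HB Require Import structures.
From mathcomp Require Import all_boot all_order all_algebra.
From mathcomp Require Import all_classical all_reals all_analysis.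
From mathcomp Require Import lra.
Import Order.TTheory GRing.Theory Num.Theory.
Import numFieldNormedType.Exports numFieldTopology.Exports.
Local Open Scope classical_set_scope.
Local Open Scope ring_scope.

Set Implicit Arguments. Unset Strict Implicit.
Section H.
Context {R : realType} {n : nat}.
Notation V := 'rV[R]_n.

Lemma enormZ (t : R) (v : V) : enorm (t *: v) = `|t| * enorm v.
Proof.
rewrite /enorm; under eq_bigr do rewrite mxE exprMn.
by rewrite -mulr_sumr sqrtrM ?sqr_ge0 // sqrtr_sqr.
Qed.

Lemma haus_le_l (A B : set V) e : (haus A B <= e%:E)%E ->
  forall a, A a -> forall d, 0 < d -> exists2 b, B b & enorm (a - b) < e + d.
Proof.
move=> H a Aa d d0.
have H1 : (Defs.edist a B <= e%:E)%E.
  apply: le_trans H; rewrite /haus le_max; apply/orP; left.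
  by apply: ereal_sup_ubound; exists a.
have : (Defs.edist a B < (e + d)%:E)%E.
  by apply: le_lt_trans H1 _; rewrite lte_fin ltrDl.
by move=> /ereal_inf_ltP [_ [b Bb <-]]; rewrite lte_fin => h; exists b.
Qed.

Lemma haus_le_r (A B : set V) e : (haus A B <= e%:E)%E ->
  forall b, B b -> forall d, 0 < d -> exists2 a, A a & enorm (b - a) < e + d.
Proof.
move=> H a Aa d d0.
have H1 : (Defs.edist a A <= e%:E)%E.
  apply: le_trans H; rewrite /haus le_max; apply/orP; right.
  by apply: ereal_sup_ubound; exists a.
have : (Defs.edist a A < (e + d)%:E)%E.
  by apply: le_lt_trans H1 _; rewrite lte_fin ltrDl.
by move=> /ereal_inf_ltP [_ [b Bb <-]]; rewrite lte_fin => h; exists b.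
Qed.

Lemma haus_leP (A B : set V) r :
  (forall a, A a -> forall d, 0 < d -> exists2 b, B b & enorm (a - b) <= r + d) ->
  (forall b, B b -> forall d, 0 < d -> exists2 a, A a & enorm (b - a) <= r + d) ->
  (haus A B <= r%:E)%E.
Proof.
move=> H1 H2; rewrite /haus ge_max; apply/andP; split;
  apply/ereal_supP => _ [a Aa <-]; apply/lee_addgt0Pr => d d0;
  apply: ge_ereal_inf.
- have [b Bb h] := H1 a Aa d d0.
  by exists (enorm (a - b))%:E; [exists b | rewrite -EFinD lee_fin].
- have [b Bb h] := H2 a Aa d d0.
  by exists (enorm (a - b))%:E; [exists b | rewrite -EFinD lee_fin].
Qed.

Lemma ts_diff (c x y : V) (t : R) : c + t *: x - (c + t *: y) = t *: (x - y).
Proof. by rewrite opprD addrACA subrr add0r scalerBr. Qed.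

Lemma scale_bound (u N e d : R) : 0 <= u -> 0 < d ->
  N < e + d / (u + 1) -> u * N <= e * u + d.
Proof.
move=> u0 d0 h; set k := d / (u + 1) in h.
have k0 : 0 < k by rewrite /k divr_gt0 // ltr_wpDl.
have kd : k * (u + 1) = d by rewrite /k mulfVK // gt_eqF // ltr_wpDl.
nra.
Qed.

Lemma haus_ts (c : V) t (A B : set V) e : (haus A B <= e%:E)%E ->
  (haus (trans_scale c t A) (trans_scale c t B) <= (e * `|t|)%:E)%E.
Proof.
move=> H; apply: haus_leP.
- move=> _ [x Ax <-] d d0.
  have dp : 0 < d / (`|t| + 1) by rewrite divr_gt0 // ltr_wpDl.
  have [y By h] := haus_le_l H Ax dp.
  exists (c + t *: y); first by exists y.
  by rewrite ts_diff enormZ; apply: scale_bound.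
- move=> _ [x Ax <-] d d0.
  have dp : 0 < d / (`|t| + 1) by rewrite divr_gt0 // ltr_wpDl.
  have [y By h] := haus_le_r H Ax dp.
  exists (c + t *: y); first by exists y.
  by rewrite ts_diff enormZ; apply: scale_bound.
Qed.

Lemma enorm_cont (y : V) : continuous (fun z : V => enorm (y - z)).
Proof.
move=> z; rewrite /enorm.
apply: (continuous_comp _ (@sqrt_continuous R _)).
apply: (@continuous_big _ _ +%R 0 xpredT add_continuous _ (index_enum _)
   (fun i (v : V) => (y - v) ord0 i ^+ 2)) => i _ w.
have hc : continuous (fun v : V => (y - v) ord0 i).
  move=> w'; apply: (@continuous_comp _ _ _ (fun v : V => y - v) (fun M : V => M ord0 i)).
  - apply: cvgB; first exact: nbhs_filter; last exact: cvg_id.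
    by apply: cvg_cst; exact: nbhs_filter.
  - exact: coord_continuous.
have -> : (fun v : V => (y - v) ord0 i ^+ 2) =
  (fun v => (y - v) ord0 i * (y - v) ord0 i) by apply/funext => v; rewrite expr2.
by apply: cvgM; [exact: nbhs_filter | exact: hc | exact: hc].
Qed.

Lemma proj_ex (A : set V) y : A !=set0 -> compact A -> exists y0, Defs.proj A y y0.
Proof.
move=> A0 cA.
have [c cA' cmin] := compact_EVT_min A0 cA
   (continuous_subspaceT (enorm_cont (y:=y))).
exists c; split; first by move: cA'; rewrite inE.
apply/eqP; rewrite eq_le; apply/andP; split.
- by apply/ereal_infP => _ [z Az <-]; rewrite lee_fin cmin // inE.
- by apply: ereal_inf_lbound; exists c => //; move: cA'; rewrite inE.
Qed.
End H.

Lemma LMa_eq (R : realType) (n : nat) x0 (Dp Dm : 'rV[R]_n -> set 'rV[R]_n) y0 x :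
  LMa x0 Dp Dm y0 x = trans_scale y0 (x - x0) ((if x0 <= x then Dp else Dm) y0).
Proof. by rewrite /LMa; case: ifP. Qed.

Theorem mainTheorem2 (R : realType) (n : nat) (a b x0 : R)
    (F : R -> set 'rV[R]_n) (Dp Dm : 'rV[R]_n -> set 'rV[R]_n) :
  a < b ->
  (forall x, a < x < b -> F x !=set0 /\ compact (F x)) ->
  a < x0 < b ->
  mdiff_right F x0 Dp -> mdiff_left F x0 Dm ->
  (forall eps : R, 0 < eps -> exists2 delta : R, 0 < delta &
     forall x, a < x < b -> 0 < `|x - x0| < delta ->
       (ereal_sup [set haus (LMa x0 Dp Dm y0 x)
                          (trans_scale y0 (x - x0) (mquot F x0 x y0)) | y0 in F x0]
         <= (eps * `|x - x0|)%:E)%E)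
  /\
  (forall eps : R, 0 < eps -> exists2 delta : R, 0 < delta &
     forall x, a < x < b -> 0 < `|x - x0| < delta ->
       (haus (F x) (LM F x0 Dp Dm x) <= (eps * `|x - x0|)%:E)%E).
Proof.
move=> ab hF hx0 [Dp0 hp] [Dm0 hm].
have key : forall eps : R, 0 < eps -> exists2 delta : R, 0 < delta &
  forall x, 0 < `|x - x0| < delta -> forall y0, F x0 y0 ->
   (haus ((if (x0 <= x)%R then Dp else Dm) y0) (mquot F x0 x y0) <= eps%:E)%E.
  move=> eps e0.
  have [d1 d1p h1] := hp eps e0.
  have [d2 d2p h2] := hm eps e0.
  exists (Num.min d1 d2); first by rewrite lt_min d1p d2p.
  move=> x /andP[xp]; rewrite lt_min => /andP[xd1 xd2] y0 Fy0.
  move: xd1 xd2; rewrite !ltr_norml => /andP[l1 r1] /andP[l2 r2].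
  have xne : x != x0.
    by apply: contraTneq xp => ->; rewrite subrr normr0 ltxx.
  case: (boolP (x0 <= x)) => hx.
  - have hx' : x0 < x by rewrite lt_neqAle eq_sym xne hx.
    have r1' : x < x0 + d1 by lra.
    have := h1 x; rewrite hx' r1' /= => /(_ isT) /ereal_supP.
    by apply; exists y0.
  - rewrite -ltNge in hx.
    have l2' : x0 - d2 < x by lra.
    have := h2 x; rewrite hx l2' /= => /(_ isT) /ereal_supP.
    by apply; exists y0.
split.
- move=> eps e0; have [delta dp hd] := key eps e0.
  exists delta => // x _ hxd; apply/ereal_supP => _ [y0 Fy0 <-].
  by rewrite LMa_eq; apply: haus_ts; exact: hd.
- move=> eps e0; have [delta dp hd] := key eps e0.
  exists delta => // x xab hxd.
  have tne : x - x0 != 0.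
    by move: hxd => /andP[+ _]; rewrite normr_gt0.
  apply: haus_leP.
  + move=> y Fxy d d0.
    have [F0 cF0] := hF x0 hx0.
    have [y0 [Fy0 py0]] := proj_ex y F0 cF0.
    have qin : mquot F x0 x y0 ((x - x0)^-1 *: (y - y0)).
      exists y => //; split => //; split => //; left; by split.
    have dp' : 0 < d / (`|x - x0| + 1) by rewrite divr_gt0 // ltr_wpDl.
    have [dd Ddd h] := haus_le_r (hd x hxd y0 Fy0) qin dp'.
    exists (y0 + (x - x0) *: dd).
      exists y0 => //; rewrite LMa_eq; by exists dd.
    have yq : y0 + (x - x0) *: ((x - x0)^-1 *: (y - y0)) = y.
      by rewrite scalerA mulfV // scale1r addrC subrK.
    rewrite -[X in enorm (X - _)]yq ts_diff enormZ.
    by apply: scale_bound.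
  + move=> z [y0 Fy0]; rewrite LMa_eq => -[dd Ddd <-] d d0.
    have dp' : 0 < d / (`|x - x0| + 1) by rewrite divr_gt0 // ltr_wpDl.
    have [_ [y [_ [Fxy _]] <-] h] := haus_le_l (hd x hxd y0 Fy0) Ddd dp'.
    exists y => //.
    have yq : y0 + (x - x0) *: ((x - x0)^-1 *: (y - y0)) = y.
      by rewrite scalerA mulfV // scale1r addrC subrK.
    rewrite -[X in enorm (_ - X)]yq ts_diff enormZ.
    by apply: scale_bound.
Qed.
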